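(* Consider the asynchronous $(n,k)$ game on the complete graph with agent set $[n]$ ($n\ge2$) consisting of $n_r$ rejectors and $n-n_r$ random followers, and let $Z_t=\sum_{i\in[n]}x_i(t)$. Then $$\mathbb{E}[Z_{t+1}-Z_t]=-\frac{n_r\,\mathbb{E}[Z_t]}{n(n-1)},$$ and $(Z_t)_{t\ge0}$ is a supermartingale.
   Context: Each agent $i\in[n]$ holds an opinion $x_i(t)\in\{0,1\}$ at time $t=0,1,2,\dots$. The social graph is complete: every agent's social neighbors are all the other $n-1$ agents. The game is asynchronous: at each time step a single agent, chosen uniformly at random from $[n]$ (independently of the past), updates its opinion, and all other opinions stay the same. A rejector holds opinion $0$ at all times. A random follower has initial opinion distributed as Bernoulli$(1/2)$ (independently across agents), and when it updates it adopts the current opinion of one of its social neighbors chosen uniformly at random. *)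

(* Defs.v *)
From HB Require Import structures.
From mathcomp Require Import all_boot all_order all_algebra.
Set Implicit Arguments. Unset Strict Implicit. Unset Printing Implicit Defensive.
Import Order.TTheory GRing.Theory Num.Theory.
Local Open Scope ring_scope.

Section Game.
Variables (R : realFieldType) (n : nat) (rej : {set 'I_n}).

(* opinion profile x : agent -> opinion (true = 1, false = 0) *)
Definition config := {ffun 'I_n -> bool}.

Definition upd (x : config) (i : 'I_n) (b : bool) : config :=
  [ffun k => if k == i then b else x k].

Definition Zsum (x : config) : R := \sum_(i < n) ((x i : nat)%:R).

(* initial law: rejectors hold 0, followers i.i.d. Bernoulli(1/2) *)
Definition mu0 (x : config) : R :=
  \prod_(i < n) (if i \in rej then (if x i then 0 else 1) else 2^-1).

(* one asynchronous step: a uniformly random agent i updates; a rejector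
   keeps opinion 0; a random follower copies the opinion of a uniformly
   random social neighbour j <> i (complete graph: n-1 neighbours). *)
Definition trans (x y : config) : R :=
  \sum_(i < n)
    (n%:R^-1 *
     (if i \in rej then ((y == upd x i false) : nat)%:R
      else \sum_(j < n | j != i) ((n.-1)%:R^-1 * ((y == upd x i (x j)) : nat)%:R))).

Fixpoint ptrans (x : config) (s : seq config) : R :=
  match s with
  | [::] => 1
  | y :: s' => trans x y * ptrans y s'
  end.

(* probability that the history (x(0), x(1), ..., x(t)) equals x0 :: s *)
Definition phist (x0 : config) (s : seq config) : R := mu0 x0 * ptrans x0 s.

(* E[Z_t], computed on the space of histories of length t+1 *)
Definition EZ (t : nat) : R :=
  \sum_(x0 : config) \sum_(s : t.-tuple config) phist x0 s * Zsum (last x0 s).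

(* supermartingale w.r.t. the natural filtration of the history:
   for every history h of length t+1,
   E[Z_{t+1} ; history_t = h] <= Z_t(h) * P(history_t = h),
   i.e. E[Z_{t+1} | F_t] <= Z_t (integrability is automatic: finite space). *)
Definition Z_supermartingale : Prop :=
  forall (t : nat) (x0 : config) (s : t.-tuple config),
    \sum_(y : config) phist x0 (rcons s y) * Zsum y
      <= phist x0 s * Zsum (last x0 s).

End Game.

(* Main.v *)
Require Import Defs.
From HB Require Import structures.
From mathcomp Require Import all_boot all_order all_algebra.
From mathcomp Require Import ring lra.
Import Order.TTheory GRing.Theory Num.Theory.
Local Open Scope ring_scope.

Section Aux.
Variables (R : realFieldType) (n : nat) (rej : {set 'I_n}).

Lemma sum_tupleS (T : finType) (t : nat) (F : t.+1.-tuple T -> R) :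
  \sum_(s : t.+1.-tuple T) F s = \sum_(y : T) \sum_(s : t.-tuple T) F [tuple of y :: s].
Proof.
rewrite pair_big /=.
rewrite (reindex (fun p : T * t.-tuple T => [tuple of p.1 :: p.2])) //=.
exists (fun s : t.+1.-tuple T => (thead s, [tuple of behead s])).
  move=> [y s] _ /=; congr pair; try apply: val_inj; done.
by move=> s _; rewrite [s in RHS]tuple_eta.
Qed.

Lemma sum_tuple0 (T : finType) (F : 0.-tuple T -> R) :
  \sum_(s : 0.-tuple T) F s = F [tuple].
Proof. apply: big_pred1 => s /=; rewrite [s]tuple0; symmetry; exact: eqxx. Qed.

Definition G (t : nat) (x : config n) (f : config n -> R) : R :=
  \sum_(s : t.-tuple (config n)) ptrans R rej x s * f (last x s).

Definition Tf (f : config n -> R) (x : config n) : R :=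
  \sum_(y : config n) trans R rej x y * f y.

Lemma G0 x f : G 0 x f = f x.
Proof. by rewrite /G sum_tuple0 /= mul1r. Qed.

Lemma GS t x f : G t.+1 x f = \sum_y trans R rej x y * G t y f.
Proof.
rewrite /G sum_tupleS; apply: eq_bigr => y _.
rewrite big_distrr; apply: eq_bigr => s _ /=; by rewrite mulrA.
Qed.

Lemma GT t : forall x f, G t.+1 x f = G t x (Tf f).
Proof.
elim: t => [|t IH] x f; first by rewrite GS G0; apply: eq_bigr => y _; rewrite G0.
rewrite GS [RHS]GS; apply: eq_bigr => y _; by rewrite IH.
Qed.

Lemma Glin t x a b f g :
  G t x (fun z => a * f z + b * g z) = a * G t x f + b * G t x g.
Proof.
rewrite /G !big_distrr -big_split; apply: eq_bigr => s _ /=; ring.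
Qed.

Lemma Gext t x f g : f =1 g -> G t x f = G t x g.
Proof. by move=> e; apply: eq_bigr => s _; rewrite e. Qed.


Lemma sum_eq1 (z : config n) (g : config n -> R) :
  \sum_y ((y == z) : nat)%:R * g y = g z.
Proof.
rewrite (bigD1 z) //= eqxx mul1r big1 ?addr0 // => y /negbTE ->; by rewrite mul0r.
Qed.

Lemma TE f x : Tf f x = \sum_i n%:R^-1 * (if i \in rej then f (upd x i false)
   else \sum_(j | j != i) (n.-1)%:R^-1 * f (upd x i (x j))).
Proof.
rewrite /Tf /trans.
under eq_bigr => y _ do rewrite mulr_suml.
rewrite exchange_big /=; apply: eq_bigr => i _.
under eq_bigr => y _ do rewrite -mulrA.
rewrite -big_distrr /=; congr (_ * _).
case: (i \in rej); first exact: sum_eq1.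
under eq_bigr => y _ do rewrite mulr_suml.
rewrite exchange_big /=; apply: eq_bigr => j _.
under eq_bigr => y _ do rewrite -mulrA.
by rewrite -big_distrr /= sum_eq1.
Qed.

Lemma sum_upd (P : pred 'I_n) x i b :
  \sum_(k | P k) ((upd x i b k : nat)%:R : R) =
  \sum_(k | P k) ((x k : nat)%:R) + (if P i then (b : nat)%:R - (x i : nat)%:R else 0).
Proof.
case Pi: (P i).
  rewrite (bigD1 i) //= [in RHS](bigD1 i) //= /upd ffunE eqxx.
  rewrite (eq_bigr (fun k => ((x k : nat)%:R))); first by ring.
  by move=> k /andP[_ /negbTE]; rewrite ffunE => ->.
rewrite addr0; apply: eq_bigr => k Pk; rewrite /upd ffunE.
by case: eqP => // ki; rewrite ki Pi in Pk.
Qed.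


Definition Zr (x : config n) : R := \sum_(i in rej) ((x i : nat)%:R).

Lemma Zsum_upd (x : config n) i b : Zsum R (upd x i b) = Zsum R x + ((b : nat)%:R - (x i : nat)%:R).
Proof. exact: (sum_upd xpredT). Qed.

Lemma Zr_upd (x : config n) i b : Zr (upd x i b) =
  Zr x + (if i \in rej then (b : nat)%:R - (x i : nat)%:R else 0).
Proof. exact: (sum_upd (mem rej)). Qed.

Lemma split_rej (F : 'I_n -> R) :
  \sum_i F i = \sum_(i in rej) F i + \sum_(i | i \notin rej) F i.
Proof. by rewrite [LHS](bigID (fun i => i \in rej)). Qed.

Lemma sum_neq (i : 'I_n) (F : 'I_n -> R) :
  \sum_(j | j != i) F j = \sum_j F j - F i.
Proof. by rewrite [in RHS](bigD1 i) //=; ring. Qed.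

Lemma sum_const_all (K : R) : \sum_(i : 'I_n) K = K * n%:R.
Proof. by rewrite sumr_const card_ord mulr_natr. Qed.

Lemma sum_const_rej (K : R) : \sum_(i in rej) K = K * #|rej|%:R.
Proof. by rewrite sumr_const mulr_natr. Qed.


Lemma natpred (H : (2 <= n)%N) : (n.-1)%:R = n%:R - 1 :> R.
Proof. by rewrite -subn1 natrB // ltnW. Qed.

Lemma n_neq0 (H : (2 <= n)%N) : n%:R != 0 :> R.
Proof. by rewrite pnatr_eq0 -lt0n ltnW. Qed.

Lemma n1_neq0 (H : (2 <= n)%N) : n%:R - 1 != 0 :> R.
Proof. by rewrite -natpred // pnatr_eq0 -lt0n -ltnS prednK // ltnW. Qed.

Lemma sum_rejC (K : R) : \sum_(i | i \notin rej) K = K * n%:R - K * #|rej|%:R.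
Proof. by rewrite -sum_const_all -sum_const_rej (split_rej (fun _ => K)); ring. Qed.

Lemma TZ (H : (2 <= n)%N) (x : config n) :
  Tf (@Zsum R n) x = Zsum R x - (#|rej|%:R * Zsum R x - Zr x) / (n%:R * (n%:R - 1)).
Proof.
rewrite TE.
set Z := Zsum R x.
transitivity (\sum_i (n%:R^-1 * (Z - (x i : nat)%:R) + (if i \notin rej then
   n%:R^-1 * (n%:R - 1)^-1 * (Z - (x i : nat)%:R) else 0))).
  apply: eq_bigr => i _; case: ifP => ir /=.
    by rewrite Zsum_upd sub0r addr0.
  under eq_bigr => j _ do rewrite Zsum_upd.
  rewrite -big_distrr /= big_split /= sum_neq sum_neq sum_const_all natpred //.
  rewrite sumrB sum_const_all subrr subr0.
  rewrite -[\sum_j _]/(Zsum R x) /Z.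
  move: (Zsum R x) ((x i : nat)%:R) => a b.
  field; by rewrite ?(n1_neq0 H) ?(n_neq0 H).
rewrite big_split /= -big_mkcond /= -!big_distrr /= !sumrB.
change (\sum_(i0 < n) ((x i0 : nat)%:R : R)) with Z.
rewrite sum_const_all sum_rejC.
have hs : \sum_(i | i \notin rej) ((x i : nat)%:R : R) = Z - Zr x.
  by rewrite /Z /Zsum (split_rej (fun i => ((x i : nat)%:R : R))) /Zr; ring.
rewrite hs.
field; by rewrite ?(n1_neq0 H) ?(n_neq0 H).
Qed.

Lemma TZr (H : (2 <= n)%N) (x : config n) : Tf Zr x = Zr x - Zr x / n%:R.
Proof.
rewrite TE.
transitivity (\sum_i (n%:R^-1 * Zr x - (if i \in rej then n%:R^-1 * (x i : nat)%:R else 0))).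
  apply: eq_bigr => i _; case: ifP => ir /=.
    rewrite Zr_upd ir /=; move: (Zr x) ((x i : nat)%:R) => a b; ring.
  under eq_bigr => j _ do rewrite Zr_upd ir addr0.
  rewrite -big_distrr /= sum_neq sum_const_all natpred //.
  field; by rewrite ?(n1_neq0 H) ?(n_neq0 H).
rewrite sumrB -big_mkcond /= -big_distrr /= sum_const_all.
rewrite -[\sum_(i in rej) n%:R^-1 * _]big_distrr /= -/(Zr x); move: (Zr x) => a.
field; by rewrite ?(n1_neq0 H) ?(n_neq0 H).
Qed.


Lemma trans_ge0 x y : 0 <= trans R rej x y.
Proof.
apply: sumr_ge0 => i _; apply: mulr_ge0; first by rewrite invr_ge0 ler0n.
case: ifP => _; first exact: ler0n.
apply: sumr_ge0 => j _; apply: mulr_ge0; [by rewrite invr_ge0 ler0n | exact: ler0n].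
Qed.

Lemma ptrans_ge0 s : forall x, 0 <= ptrans R rej x s.
Proof. elim: s => [|y s IH] x /=; [exact: ler01 | exact: mulr_ge0 (trans_ge0 _ _) (IH _)]. Qed.

Lemma mu0_ge0 x : 0 <= mu0 R rej x.
Proof.
apply: prodr_ge0 => i _; case: ifP => _; last by rewrite invr_ge0 ler0n.
by case: (x i); rewrite ?ler01 ?lexx.
Qed.

Lemma ptrans_rcons s : forall x y,
  ptrans R rej x (rcons s y) = ptrans R rej x s * trans R rej (last x s) y.
Proof. elim: s => [|z s IH] x y /=; first by rewrite mul1r mulr1. by rewrite IH mulrA. Qed.

Lemma EZ_G t : EZ R rej t = \sum_x0 mu0 R rej x0 * G t x0 (@Zsum R n).
Proof.
apply: eq_bigr => x0 _; rewrite /G big_distrr; apply: eq_bigr => s _.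
by rewrite /phist -mulrA.
Qed.

Lemma mu0Zr x : mu0 R rej x * Zr x = 0.
Proof.
case: (boolP [exists i in rej, x i]).
  case/exists_inP => i ir xi.
  by rewrite /mu0 (bigD1 i) //= ir xi mul0r mul0r.
rewrite negb_exists_in => /forall_inP h.
rewrite /Zr big1 ?mulr0 // => i ir; by rewrite (negbTE (h i ir)).
Qed.

Lemma EZr0 (H : (2 <= n)%N) t : \sum_x0 mu0 R rej x0 * G t x0 Zr = 0.
Proof.
elim: t => [|t IH].
  by apply: big1 => x0 _; rewrite G0 mu0Zr.
rewrite -[RHS](mulr0 (1 - n%:R^-1)); rewrite -[X in _ = _ * X]IH big_distrr /=; apply: eq_bigr => x0 _.
rewrite GT (@Gext _ _ _ (fun z => (1 - n%:R^-1) * Zr z + 0 * Zr z)).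
  rewrite Glin mul0r addr0; ring.
move=> z /=; rewrite TZr //; move: (Zr z) => a; ring.
Qed.

Lemma Zr_le (x : config n) : Zr x <= Zsum R x.
Proof.
rewrite /Zsum (split_rej (fun i => ((x i : nat)%:R : R))) -/(Zr x) lerDl.
by apply: sumr_ge0 => i _; exact: ler0n.
Qed.

End Aux.
Arguments G {R n} rej t x f.
Arguments Zr {R n} rej x.
Arguments Tf {R n} rej f x.

Theorem lemma4 (R : realFieldType) (n nr : nat) (rej : {set 'I_n}) :
  (2 <= n)%N -> #|rej| = nr ->
  (forall t : nat,
     EZ R rej t.+1 - EZ R rej t = - (nr%:R * EZ R rej t) / (n%:R * (n%:R - 1)))
  /\ Z_supermartingale R rej.
Proof.
move=> H <-; split.
  move=> t; rewrite !EZ_G.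
  set c := (n%:R * (n%:R - 1) : R)^-1.
  transitivity (\sum_x0 mu0 R rej x0 * ((1 - #|rej|%:R * c) * G rej t x0 (@Zsum R n)
      + c * G rej t x0 (Zr rej)) - \sum_x0 mu0 R rej x0 * G rej t x0 (@Zsum R n)).
    congr (_ - _); apply: eq_bigr => x0 _; rewrite GT -Glin; congr (_ * _).
    apply: Gext => z; rewrite TZ // /c; move: (Zsum R z) (Zr rej z) => a b; field.
    by rewrite ?(@n1_neq0 R n H) ?(@n_neq0 R n H).
  under eq_bigr => x0 _ do rewrite mulrDr [mu0 R rej x0 * ((1 - _) * _)]mulrCA [mu0 R rej x0 * (c * _)]mulrCA.
  rewrite big_split /= -!big_distrr /= EZr0 // mulr0 addr0 /c.
  move: (\sum_x0 _) => a; field.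
  by rewrite ?(@n1_neq0 R n H) ?(@n_neq0 R n H) ?mulf_neq0.
move=> t x0 s.
rewrite /phist.
under eq_bigr => y _ do rewrite ptrans_rcons -!mulrA.
rewrite -big_distrr /= -big_distrr /= mulrA.
apply: ler_wpM2l; first by apply: mulr_ge0; [exact: mu0_ge0 | exact: ptrans_ge0].
have := @TZ R n rej H (last x0 s); rewrite /Tf => ->.
rewrite gerBl; apply: divr_ge0; last first.
  by apply: mulr_ge0; [exact: ler0n | rewrite -(@natpred R n H) ler0n].
rewrite subr_ge0.
case: (posnP #|rej|) => [/eqP|] hr.
  rewrite cards_eq0 in hr; rewrite /Zr (eqP hr) big_set0.
  by rewrite cards0 mul0r.
apply: (le_trans (@Zr_le R n rej _)).
rewrite ler_peMl //; first by apply: sumr_ge0 => i _; exact: ler0n.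
by rewrite ler1n.
Qed.
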